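(* There exist $A_0>1$ and $C_0>0$ such that for every $A\ge A_0$ and every $\xi\in H^1(\mathbb R,\mathbb C)\cap L^2_c$, with $w=\zeta_A\xi$, $$\|w'\|_{L^2}^2-|w(0)|^2\ \ge\ -\frac{C_0}{A^2}\big(\|w'\|_{L^2}^2+|w(0)|^2\big).$$
   Context: $\varphi(x)=2^{-1/2}e^{-|x|/2}$ and $L^2_c=\{u\in L^2(\mathbb R,\mathbb C):\int u\varphi\,dx=0\}$ (the continuous spectral subspace of $H_1=-\partial_x^2-\delta$; note $\|w'\|^2-|w(0)|^2$ is the quadratic form of $H_1$). $\chi:\mathbb R\to[0,1]$ is a fixed even smooth function with $\chi=1$ on $[-1,1]$, $\chi=0$ outside $[-2,2]$, $\chi'\le0$ on $(0,\infty)$. For $A>0$: $\zeta_A(x)=\exp\big(-\frac{|x|}{A}(1-\chi(x))\big)$. *)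

(* Defs.v *)
From Stdlib Require Import Reals List.
Open Scope R_scope.

(* A tagged division of [a,b]: list of (tag t, right endpoint c); the left
   endpoint of each piece is the right endpoint of the previous one. *)
Fixpoint tdiv (a b : R) (l : list (R * R)) : Prop :=
  match l with
  | nil => a = b
  | (t, c) :: l' => a <= t <= c /\ tdiv c b l'
  end.

Fixpoint fine (d : R -> R) (a : R) (l : list (R * R)) : Prop :=
  match l with
  | nil => True
  | (t, c) :: l' => t - d t < a /\ c < t + d t /\ fine d c l'
  end.

Fixpoint rsum (f : R -> R) (a : R) (l : list (R * R)) : R :=
  match l with
  | nil => 0
  | (t, c) :: l' => f t * (c - a) + rsum f c l'
  end.

Definition HK_integral (f : R -> R) (a b I : R) : Prop :=
  forall eps, 0 < eps ->
    exists d : R -> R, (forall x, 0 < d x) /\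
      forall l, tdiv a b l -> fine d a l -> Rabs (rsum f a l - I) < eps.

Definition integral_R (f : R -> R) (I : R) : Prop :=
  exists F : R -> R -> R,
    (forall a b, a <= b -> HK_integral f a b (F a b)) /\
    (forall eps, 0 < eps -> exists M, forall a b,
        a <= - M -> M <= b -> Rabs (F a b - I) < eps).

Definition sqnorm (z : R * R) : R := fst z ^ 2 + snd z ^ 2.

Definition L2 (u : R -> R * R) : Prop :=
  exists N, integral_R (fun x => sqnorm (u x)) N.

(* u is (locally) absolutely continuous with derivative g:
   u(y) - u(x) = int_x^y g, componentwise. *)
Definition has_deriv_AC (u g : R -> R * R) : Prop :=
  forall x y, x <= y ->
    HK_integral (fun t => fst (g t)) x y (fst (u y) - fst (u x)) /\
    HK_integral (fun t => snd (g t)) x y (snd (u y) - snd (u x)).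

(* H^1(R, C), via its continuous representative. *)
Definition H1 (u : R -> R * R) : Prop :=
  L2 u /\ exists g, has_deriv_AC u g /\ L2 g.

Definition phi (x : R) : R := / sqrt 2 * exp (- Rabs x / 2).

Definition L2c (u : R -> R * R) : Prop :=
  integral_R (fun x => fst (u x) * phi x) 0 /\
  integral_R (fun x => snd (u x) * phi x) 0.

Definition smooth (f : R -> R) : Prop :=
  exists D : nat -> R -> R, D 0%nat = f /\
    forall n x, derivable_pt_lim (D n) x (D (S n) x).

Definition zeta (chi : R -> R) (A x : R) : R :=
  exp (- (Rabs x / A) * (1 - chi x)).

Definition cutoff_mul (h : R -> R) (u : R -> R * R) : R -> R * R :=
  fun x => (h x * fst (u x), h x * snd (u x)).

(* Main.v *)
Require Import Defs.
From Stdlib Require Import Reals List.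
Open Scope R_scope.
From Coquelicot Require Import Coquelicot.
From Stdlib Require Import Lra Psatz ClassicalEpsilon Classical.
Open Scope R_scope.

Lemma tdiv_le a b l : tdiv a b l -> a <= b.
Proof.
  revert a; induction l as [|[t c] l IH]; simpl; intros a H.
  - lra.
  - destruct H as [H1 H2]. specialize (IH _ H2). lra.
Qed.

Lemma tdiv_app a c b l1 l2 : tdiv a c l1 -> tdiv c b l2 -> tdiv a b (l1 ++ l2).
Proof.
  revert a; induction l1 as [|[t e] l IH]; simpl; intros a H1 H2.
  - subst; auto.
  - destruct H1; split; [auto| eapply IH; eauto].
Qed.

Lemma fine_app d a c l1 l2 : tdiv a c l1 -> fine d a l1 -> fine d c l2 -> fine d a (l1 ++ l2).
Proof.
  revert a; induction l1 as [|[t e] l IH]; simpl; intros a H1 F1 F2.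
  - subst; auto.
  - destruct H1, F1 as [? [? ?]]; split; [|split]; eauto.
Qed.

Lemma rsum_app f a c l1 l2 : tdiv a c l1 -> rsum f a (l1 ++ l2) = rsum f a l1 + rsum f c l2.
Proof.
  revert a; induction l1 as [|[t e] l IH]; simpl; intros a H1.
  - subst; ring.
  - destruct H1. rewrite (IH _ H0). ring.
Qed.

Lemma fine_mono d d' a l : (forall x, d' x <= d x) -> fine d' a l -> fine d a l.
Proof.
  intros Hd; revert a; induction l as [|[t e] l IH]; simpl; intros a F; auto.
  destruct F as [? [? ?]]; specialize (Hd t); repeat split; auto; lra.
Qed.

Lemma rsum_le f g a b l : tdiv a b l -> (forall t, a <= t <= b -> f t <= g t) ->
  rsum f a l <= rsum g a l.
Proof.
  revert a; induction l as [|[t c] l IH]; simpl; intros a H Hfg.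
  - lra.
  - destruct H as [H1 H2]. pose proof (tdiv_le _ _ _ H2).
    assert (f t <= g t) by (apply Hfg; lra).
    assert (rsum f c l <= rsum g c l) by (apply IH; auto; intros; apply Hfg; lra).
    assert (f t * (c - a) <= g t * (c - a)) by (apply Rmult_le_compat_r; lra). lra.
Qed.

Lemma rsum_lin f g al be a l :
  rsum (fun x => al * f x + be * g x) a l = al * rsum f a l + be * rsum g a l.
Proof.
  revert a; induction l as [|[t c] l IH]; simpl; intros a.
  - ring.
  - rewrite IH. ring.
Qed.

Lemma rsum_ext f g a l : (forall x, f x = g x) -> rsum f a l = rsum g a l.
Proof.
  intros H; revert a; induction l as [|[t c] l IH]; simpl; intros a; auto.
  rewrite IH, H; auto.
Qed.

Lemma rsum_one a b l : tdiv a b l -> rsum (fun _ => 1) a l = b - a.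
Proof.
  revert a; induction l as [|[t c] l IH]; simpl; intros a H.
  - lra.
  - destruct H as [_ H]. rewrite (IH _ H). ring.
Qed.

Lemma rsum_nonneg f a b l : tdiv a b l -> (forall t, a <= t <= b -> 0 <= f t) -> 0 <= rsum f a l.
Proof.
  intros H Hf. pose proof (rsum_le (fun _ => 0) f a b l H Hf).
  replace (rsum (fun _ => 0) a l) with 0 in H0; auto.
  clear -l. revert a. induction l as [|[t c] l IH]; simpl; intros; auto.
  rewrite <- IH; ring.
Qed.


Lemma CS_step (S B y D e : R) : 0 <= B -> 0 <= e -> 0 <= D -> S^2 <= e * B ->
  (y * D + S)^2 <= (D + e) * (y^2 * D + B).
Proof.
  intros HB He HD HS.
  assert (H0 : 0 <= B + e*y^2) by nra.
  assert (Hsq : (2*y*S)^2 <= (B + e*y^2)^2).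
  { assert (0 <= (B - e*y^2)^2) by apply pow2_ge_0. nra. }
  assert (2 * y * S <= B + e * y^2).
  { destruct (Rle_dec (2*y*S) 0); [lra|].
    apply Rnot_le_lt in n. nra. }
  assert (0 <= D * (y^2 * D)) by nra.
  nra.
Qed.

Lemma rsum_CS g a b l : tdiv a b l ->
  (rsum g a l)^2 <= (b - a) * rsum (fun x => g x ^ 2) a l.
Proof.
  revert a; induction l as [|[t c] l IH]; simpl; intros a H.
  - lra.
  - destruct H as [H1 H2]. specialize (IH _ H2). pose proof (tdiv_le _ _ _ H2).
    assert (HB : 0 <= rsum (fun x => g x ^ 2) c l).
    { apply (rsum_nonneg _ _ b); auto. intros; apply pow2_ge_0. }
    replace (b - a) with ((c - a) + (b - c)) by ring.
    apply CS_step; auto; lra.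
Qed.


Lemma cousin d a b : (forall x, 0 < d x) -> a <= b -> exists l, tdiv a b l /\ fine d a l.
Proof.
  intros Hd Hab.
  set (E := fun x => a <= x <= b /\ exists l, tdiv a x l /\ fine d a l).
  assert (HbE : bound E) by (exists b; intros x [Hx _]; lra).
  assert (HaE : exists x, E x) by (exists a; split; [lra| exists nil; simpl; auto]).
  destruct (completeness E HbE HaE) as [s [Hub Hlub]].
  assert (Has : a <= s) by (apply Hub; destruct HaE; unfold E; split; [lra| exists nil; simpl; auto]).
  assert (Hsb : s <= b) by (apply Hlub; intros x [Hx _]; lra).
  assert (HEs : E s).
  { assert (exists x, E x /\ s - d s < x).
    { apply NNPP; intro Hn.
      assert (is_upper_bound E (s - d s)).
      { intros x Ex. apply Rnot_lt_le; intro Hlt. apply Hn; eauto. }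
      specialize (Hlub _ H). specialize (Hd s). lra. }
    destruct H as [x [[Hx [l [Hl Hf]]] Hlt]].
    assert (x <= s) by (apply Hub; split; [lra| eauto]).
    split; [lra|]. exists (l ++ (s, s) :: nil). split.
    - apply tdiv_app with x; auto. simpl. lra.
    - apply fine_app with x; auto. simpl. specialize (Hd s). lra. }
  destruct (Req_dec s b) as [->|Hne].
  - destruct HEs as [_ H]; exact H.
  - exfalso. destruct HEs as [_ [l [Hl Hf]]].
    set (y := Rmin b (s + d s / 2)).
    specialize (Hd s).
    assert (s < y) by (unfold y; apply Rmin_glb_lt; lra).
    assert (y <= b) by apply Rmin_l.
    assert (y <= s + d s / 2) by apply Rmin_r.
    assert (E y).
    { split; [lra|]. exists (l ++ (s, y) :: nil). split.
      - apply tdiv_app with s; auto. simpl. lra.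
      - apply fine_app with s; auto. simpl. lra. }
    specialize (Hub _ H2). lra.
Qed.


Lemma rsum_degen f c b l : tdiv c b l -> b <= c -> rsum f c l = 0.
Proof.
  revert c; induction l as [|[t e] l IH]; simpl; intros c H Hbc; auto.
  destruct H as [H1 H2]. pose proof (tdiv_le _ _ _ H2).
  assert (e = c) by lra. subst e. rewrite IH; auto. ring.
Qed.

Lemma HK_point f b : HK_integral f b b 0.
Proof.
  intros eps Heps. exists (fun _ => 1). split; [intros; lra|].
  intros l Hl _. rewrite (rsum_degen f b b l Hl); [|lra].
  rewrite Rminus_0_r, Rabs_R0; auto.
Qed.

Lemma eps_le x y K : 0 <= K -> (forall eps, 0 < eps -> x <= y + eps * K) -> x <= y.
Proof.
  intros HK H. apply Rnot_lt_le; intro Hlt.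
  specialize (H ((x - y) / (2 * (K + 1)))).
  assert (0 < (x - y) / (2 * (K + 1))) by (apply Rdiv_lt_0_compat; lra).
  specialize (H H0).
  assert ((x - y) / (2 * (K + 1)) * K < x - y).
  { unfold Rdiv. rewrite Rmult_assoc.
    assert (/ (2 * (K + 1)) * K < 1).
    { apply (Rmult_lt_reg_l (2*(K+1))); [lra|].
      rewrite <- Rmult_assoc, Rinv_r; lra. }
    nra. }
  lra.
Qed.

Ltac get_gauge H eps d Hd Hdl :=
  destruct (H eps) as [d [Hd Hdl]]; [lra|].

Lemma HK_split_le h f1 f2 a c b G I1 I2 : a <= c -> c <= b ->
  HK_integral h a b G -> HK_integral f1 a c I1 -> HK_integral f2 c b I2 ->
  (forall t, a <= t <= c -> f1 t <= h t) -> (forall t, c <= t <= b -> f2 t <= h t) ->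
  I1 + I2 <= G.
Proof.
  intros Hac Hcb HG H1 H2 Hf1 Hf2.
  apply (eps_le _ _ 3); [lra|]. intros eps Heps.
  destruct (HG eps Heps) as [dh [Hdh HGl]]. destruct (H1 eps Heps) as [d1 [Hd1 H1l]]. destruct (H2 eps Heps) as [d2 [Hd2 H2l]].
  destruct (cousin (fun x => Rmin (dh x) (d1 x)) a c) as [l1 [Hl1 Fl1]]; auto.
  { intros; apply Rmin_glb_lt; auto. }
  destruct (cousin (fun x => Rmin (dh x) (d2 x)) c b) as [l2 [Hl2 Fl2]]; auto.
  { intros; apply Rmin_glb_lt; auto. }
  assert (A1 := H1l l1 Hl1 (fine_mono _ _ _ _ (fun x => Rmin_r _ _) Fl1)).
  assert (A2 := H2l l2 Hl2 (fine_mono _ _ _ _ (fun x => Rmin_r _ _) Fl2)).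
  assert (Ah := HGl (l1 ++ l2) (tdiv_app _ _ _ _ _ Hl1 Hl2)
     (fine_app _ _ _ _ _ Hl1 (fine_mono _ _ _ _ (fun x => Rmin_l _ _) Fl1)
                             (fine_mono _ _ _ _ (fun x => Rmin_l _ _) Fl2))).
  rewrite (rsum_app _ _ _ _ _ Hl1) in Ah.
  pose proof (rsum_le _ _ _ _ _ Hl1 Hf1). pose proof (rsum_le _ _ _ _ _ Hl2 Hf2).
  apply Rabs_def2 in A1. apply Rabs_def2 in A2. apply Rabs_def2 in Ah. lra.
Qed.

Lemma HK_split_ge h f1 f2 a c b G I1 I2 : a <= c -> c <= b ->
  HK_integral h a b G -> HK_integral f1 a c I1 -> HK_integral f2 c b I2 ->
  (forall t, a <= t <= c -> h t <= f1 t) -> (forall t, c <= t <= b -> h t <= f2 t) ->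
  G <= I1 + I2.
Proof.
  intros Hac Hcb HG H1 H2 Hf1 Hf2.
  apply (eps_le _ _ 3); [lra|]. intros eps Heps.
  destruct (HG eps Heps) as [dh [Hdh HGl]]. destruct (H1 eps Heps) as [d1 [Hd1 H1l]]. destruct (H2 eps Heps) as [d2 [Hd2 H2l]].
  destruct (cousin (fun x => Rmin (dh x) (d1 x)) a c) as [l1 [Hl1 Fl1]]; auto.
  { intros; apply Rmin_glb_lt; auto. }
  destruct (cousin (fun x => Rmin (dh x) (d2 x)) c b) as [l2 [Hl2 Fl2]]; auto.
  { intros; apply Rmin_glb_lt; auto. }
  assert (A1 := H1l l1 Hl1 (fine_mono _ _ _ _ (fun x => Rmin_r _ _) Fl1)).
  assert (A2 := H2l l2 Hl2 (fine_mono _ _ _ _ (fun x => Rmin_r _ _) Fl2)).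
  assert (Ah := HGl (l1 ++ l2) (tdiv_app _ _ _ _ _ Hl1 Hl2)
     (fine_app _ _ _ _ _ Hl1 (fine_mono _ _ _ _ (fun x => Rmin_l _ _) Fl1)
                             (fine_mono _ _ _ _ (fun x => Rmin_l _ _) Fl2))).
  rewrite (rsum_app _ _ _ _ _ Hl1) in Ah.
  pose proof (rsum_le _ _ _ _ _ Hl1 Hf1). pose proof (rsum_le _ _ _ _ _ Hl2 Hf2).
  apply Rabs_def2 in A1. apply Rabs_def2 in A2. apply Rabs_def2 in Ah. lra.
Qed.

Lemma HK_split_eq f a c b G I1 I2 : a <= c -> c <= b ->
  HK_integral f a b G -> HK_integral f a c I1 -> HK_integral f c b I2 -> G = I1 + I2.
Proof.
  intros. apply Rle_antisym.
  - apply (HK_split_ge f f f a c b G I1 I2); auto; intros; lra.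
  - apply (HK_split_le f f f a c b G I1 I2); auto; intros; lra.
Qed.

Lemma HK_le f g a b I J : a <= b -> HK_integral f a b I -> HK_integral g a b J ->
  (forall t, a <= t <= b -> f t <= g t) -> I <= J.
Proof.
  intros. replace I with (I + 0) by ring.
  apply (HK_split_le g f g a b b J I 0); auto; try lra. apply HK_point. intros; lra.
Qed.

Lemma HK_zero a b : HK_integral (fun _ => 0) a b 0.
Proof.
  intros eps Heps. exists (fun _ => 1). split; [intros; lra|].
  intros l _ _. replace (rsum (fun _ => 0) a l) with 0. rewrite Rminus_0_r, Rabs_R0; auto.
  clear. revert a. induction l as [|[t c] l IH]; simpl; intros; auto. rewrite <- IH; ring.
Qed.

Lemma HK_nonneg f a b I : a <= b -> HK_integral f a b I -> (forall t, a <= t <= b -> 0 <= f t) -> 0 <= I.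
Proof. intros. apply (HK_le (fun _ => 0) f a b); auto. apply HK_zero. Qed.

Lemma HK_lin f g al be a b I J : HK_integral f a b I -> HK_integral g a b J ->
  HK_integral (fun x => al * f x + be * g x) a b (al * I + be * J).
Proof.
  intros HI HJ eps Heps.
  set (e := eps / (2 * (Rabs al + Rabs be + 1))).
  assert (He : 0 < e) by (unfold e; apply Rdiv_lt_0_compat; [lra| pose proof (Rabs_pos al); pose proof (Rabs_pos be); lra]).
  destruct (HI e He) as [d1 [Hd1 H1]]. destruct (HJ e He) as [d2 [Hd2 H2]].
  exists (fun x => Rmin (d1 x) (d2 x)). split; [intros; apply Rmin_glb_lt; auto|].
  intros l Hl Fl. rewrite rsum_lin.
  specialize (H1 l Hl (fine_mono _ _ _ _ (fun x => Rmin_l _ _) Fl)).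
  specialize (H2 l Hl (fine_mono _ _ _ _ (fun x => Rmin_r _ _) Fl)).
  replace (al * rsum f a l + be * rsum g a l - (al * I + be * J)) with
     (al * (rsum f a l - I) + be * (rsum g a l - J)) by ring.
  eapply Rle_lt_trans; [apply Rabs_triang|]. rewrite !Rabs_mult.
  assert (Rabs al * Rabs (rsum f a l - I) <= Rabs al * e) by (apply Rmult_le_compat_l; [apply Rabs_pos|lra]).
  assert (Rabs be * Rabs (rsum g a l - J) <= Rabs be * e) by (apply Rmult_le_compat_l; [apply Rabs_pos|lra]).
  assert ((Rabs al + Rabs be) * e < eps).
  { unfold e. pose proof (Rabs_pos al); pose proof (Rabs_pos be).
    unfold Rdiv. rewrite <- Rmult_assoc.
    apply (Rmult_lt_reg_r (2 * (Rabs al + Rabs be + 1))); [lra|].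
    rewrite Rmult_assoc, Rinv_l; nra. }
  lra.
Qed.

Lemma sq_approx x s e : Rabs (s - x) < e -> x ^ 2 <= s ^ 2 + 2 * Rabs x * e.
Proof.
  intros H. replace (s^2) with (x^2 + 2 * (x * (s - x)) + (s-x)^2) by ring.
  assert (- (x * (s - x)) <= Rabs x * e).
  { eapply Rle_trans; [apply Rle_abs|]. rewrite Rabs_Ropp, Rabs_mult.
    apply Rmult_le_compat_l; [apply Rabs_pos| lra]. }
  assert (0 <= (s-x)^2) by apply pow2_ge_0. lra.
Qed.

Lemma HK_CS (g : R -> R * R) a b I1 I2 I3 : a <= b ->
  HK_integral (fun t => fst (g t)) a b I1 -> HK_integral (fun t => snd (g t)) a b I2 ->
  HK_integral (fun t => sqnorm (g t)) a b I3 -> I1 ^ 2 + I2 ^ 2 <= (b - a) * I3.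
Proof.
  intros Hab H1 H2 H3.
  apply (eps_le _ _ (2 * Rabs I1 + 2 * Rabs I2 + (b - a))).
  { pose proof (Rabs_pos I1); pose proof (Rabs_pos I2); lra. }
  intros eps Heps.
  destruct (H1 eps Heps) as [d1 [Hd1 H1l]]. destruct (H2 eps Heps) as [d2 [Hd2 H2l]]. destruct (H3 eps Heps) as [d3 [Hd3 H3l]].
  destruct (cousin (fun x => Rmin (d1 x) (Rmin (d2 x) (d3 x))) a b) as [l [Hl Fl]]; auto.
  { intros; repeat apply Rmin_glb_lt; auto. }
  assert (A1 := H1l l Hl (fine_mono _ _ _ _ (fun x => Rmin_l _ _) Fl)).
  assert (A2 := H2l l Hl (fine_mono _ _ _ _ (fun x => Rle_trans _ _ _ (Rmin_r _ _) (Rmin_l _ _)) Fl)).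
  assert (A3 := H3l l Hl (fine_mono _ _ _ _ (fun x => Rle_trans _ _ _ (Rmin_r _ _) (Rmin_r _ _)) Fl)).
  pose proof (rsum_CS (fun t => fst (g t)) a b l Hl).
  pose proof (rsum_CS (fun t => snd (g t)) a b l Hl).
  assert (rsum (fun t => sqnorm (g t)) a l =
     1 * rsum (fun t => fst (g t) ^ 2) a l + 1 * rsum (fun t => snd (g t) ^ 2) a l).
  { rewrite <- rsum_lin. apply rsum_ext. intros; unfold sqnorm; ring. }
  cbv beta in H, H0.
  pose proof (sq_approx _ _ _ A1). pose proof (sq_approx _ _ _ A2).
  apply Rabs_def2 in A3.
  assert ((b - a) * rsum (fun t => sqnorm (g t)) a l <= (b - a) * (I3 + eps))
    by (apply Rmult_le_compat_l; lra).
  match goal with H : rsum (fun t => sqnorm (g t)) a l = _ |- _ => rewrite H in * end.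
  assert (forall u v : R, (b - a) * (1 * u + 1 * v) = (b-a)*u + (b-a)*v) by (intros; ring).
  rewrite H8 in H7. 
  assert (eps * (2 * Rabs I1 + 2 * Rabs I2 + (b - a)) = 2 * Rabs I1 * eps + 2 * Rabs I2 * eps + (b-a)*eps) by ring.
  lra.
Qed.


Lemma deriv_local H f x e : derivable_pt_lim H x (f x) -> 0 < e ->
  exists d, 0 < d /\ forall y, Rabs (y - x) < d -> Rabs (H y - H x - f x * (y - x)) <= e * Rabs (y - x).
Proof.
  intros Hd He. destruct (Hd e He) as [del Hdel].
  exists del. split; [apply cond_pos|]. intros y Hy.
  destruct (Req_dec y x) as [->|Hne].
  - replace (H x - H x - f x * (x - x)) with 0 by ring. rewrite Rabs_R0, Rminus_diag, Rabs_R0. lra.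
  - assert (Hh : y - x <> 0) by lra.
    specialize (Hdel (y - x) Hh Hy). replace (x + (y - x)) with y in Hdel by ring.
    replace (H y - H x - f x * (y - x)) with ((y - x) * ((H y - H x) / (y - x) - f x)) by (field; auto).
    rewrite Rabs_mult. rewrite Rmult_comm. apply Rmult_le_compat_r; [apply Rabs_pos| lra].
Qed.

Lemma FTC (H f : R -> R) a b : a <= b -> (forall x, a <= x <= b -> derivable_pt_lim H x (f x)) ->
  HK_integral f a b (H b - H a).
Proof.
  intros Hab Hd eps Heps.
  set (e := eps / (2 * (b - a + 1))).
  assert (He : 0 < e) by (unfold e; apply Rdiv_lt_0_compat; lra).
  assert (Hex : forall x, exists d, 0 < d /\ (a <= x <= b -> forall y, Rabs (y - x) < d ->
     Rabs (H y - H x - f x * (y - x)) <= e * Rabs (y - x))).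
  { intros x. destruct (classic (a <= x <= b)) as [Hx|Hx].
    - destruct (deriv_local H f x e (Hd x Hx) He) as [d [Hd0 Hd1]]. exists d; auto.
    - exists 1. split; [lra| intros; contradiction]. }
  set (d := fun x => proj1_sig (constructive_indefinite_description _ (Hex x))).
  assert (Hdp : forall x, 0 < d x /\ (a <= x <= b -> forall y, Rabs (y - x) < d x ->
     Rabs (H y - H x - f x * (y - x)) <= e * Rabs (y - x))).
  { intros x. unfold d. destruct (constructive_indefinite_description _ (Hex x)); simpl; auto. }
  exists d. split; [intros; apply Hdp|].
  assert (Key : forall l a0, a <= a0 -> tdiv a0 b l -> fine d a0 l ->
     Rabs (rsum f a0 l - (H b - H a0)) <= e * (b - a0)).
  { induction l as [|[t c] l IH]; simpl; intros a0 Ha0 Hl Fl.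
    - rewrite Hl. replace (0 - (H b - H b)) with 0 by ring. rewrite Rabs_R0, Rminus_diag, Rmult_0_r. lra.
    - destruct Hl as [Ht Hl]. destruct Fl as [F1 [F2 F3]].
      pose proof (tdiv_le _ _ _ Hl).
      specialize (IH c ltac:(lra) Hl F3).
      destruct (Hdp t) as [_ Hloc].
      assert (Htab : a <= t <= b) by lra.
      assert (E1 := Hloc Htab c ltac:(rewrite Rabs_right; lra)).
      assert (E2 := Hloc Htab a0 ltac:(rewrite Rabs_left1; lra)).
      rewrite (Rabs_right (c - t)) in E1 by lra. rewrite (Rabs_left1 (a0 - t)) in E2 by lra.
      replace (f t * (c - a0) + rsum f c l - (H b - H a0)) with
        ((H a0 - H t - f t * (a0 - t)) - (H c - H t - f t * (c - t)) + (rsum f c l - (H b - H c))) by ring.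
      eapply Rle_trans; [apply Rabs_triang|].
      eapply Rle_trans; [apply Rplus_le_compat_r; apply Rabs_triang|].
      rewrite Rabs_Ropp. lra. }
  intros l Hl Fl. eapply Rle_lt_trans; [apply Key; auto; lra|].
  unfold e. unfold Rdiv. rewrite Rmult_assoc, (Rmult_comm (/ _)).
  assert ((b - a) * / (2 * (b - a + 1)) < 1).
  { apply (Rmult_lt_reg_r (2 * (b - a + 1))); [lra|]. rewrite Rmult_assoc, Rinv_l; lra. }
  nra.
Qed.


Definition qf (s : R) := sqrt (9/2 * s + 15/2).
Definition mf (b s : R) := exp (- b * s) * (b * qf s - (9/2) / (2 * qf s)).

Lemma m_bound b s : 49/100 <= b <= 1/2 -> 0 <= s -> sqrt s * exp (- b * s) <= mf b s.
Proof.
  intros Hb Hs. unfold mf. rewrite Rmult_comm. apply Rmult_le_compat_l; [left; apply exp_pos|].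
  unfold qf. set (Q := 9/2 * s + 15/2).
  assert (HQ : 0 < Q) by (unfold Q; lra).
  assert (Hq : 0 < sqrt Q) by (apply sqrt_lt_R0; auto).
  assert (Hqq : sqrt Q * sqrt Q = Q) by (apply sqrt_sqrt; lra).
  set (X := b * Q - 9/4).
  assert (HX : 2.205 * s + 1.425 <= X) by (unfold X, Q; nra).
  assert (HX2 : s * Q <= X * X).
  { unfold Q. assert (0 <= 2.205 * s + 1.425) by lra.
    assert ((2.205 * s + 1.425) * (2.205 * s + 1.425) <= X * X) by nra.
    assert (0 <= (s - 121575/72405)^2) by apply pow2_ge_0.
    nra. }
  assert (sqrt s * sqrt Q <= X).
  { rewrite <- sqrt_mult by lra. rewrite <- (sqrt_square X) by lra.
    apply sqrt_le_1; nra. }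
  replace (b * sqrt Q - 9 / 2 / (2 * sqrt Q)) with (X / sqrt Q).
  2:{ unfold X. replace (b * Q) with (b * (sqrt Q * sqrt Q)) by (rewrite Hqq; auto). field. lra. }
  apply (Rmult_le_reg_r (sqrt Q)); auto. unfold Rdiv. rewrite Rmult_assoc, Rinv_l; lra.
Qed.

Definition Hr (P K b t : R) := -2 * P * exp (- t / 2) + K * (exp (- b * t) * qf t).
Definition Hl (P K b t : R) := 2 * P * exp (t / 2) - K * (exp (- b * (- t)) * qf (- t)).

Lemma Hr_deriv P K b t : 0 <= t -> derivable_pt_lim (Hr P K b) t (P * exp (- t / 2) - K * mf b t).
Proof.
  intros Ht. apply is_derive_Reals. unfold Hr, mf, qf.
  assert (0 < sqrt (9 / 2 * t + 15 / 2)) by (apply sqrt_lt_R0; lra).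
  auto_derive.
  - lra.
  - unfold Rdiv. field. lra.
Qed.

Lemma Hl_deriv P K b t : t <= 0 -> derivable_pt_lim (Hl P K b) t (P * exp (t / 2) - K * mf b (- t)).
Proof.
  intros Ht. apply is_derive_Reals. unfold Hl, mf, qf.
  assert (0 < sqrt (9 / 2 * - t + 15 / 2)) by (apply sqrt_lt_R0; lra).
  auto_derive.
  - lra.
  - unfold Rdiv. field. lra.
Qed.

Lemma exp2_deriv t : derivable_pt_lim (fun x => exp x) t (exp t).
Proof. apply derivable_pt_lim_exp. Qed.



Lemma exp_mono x y : x <= y -> exp x <= exp y.
Proof. intros H. destruct (Req_dec x y) as [->|]; [lra|]. left; apply exp_increasing; lra. Qed.

Lemma ptwise A ch t u1 u2 p1 p2 Fs :
  100 <= A -> 0 <= ch <= 1 -> 0 <= Fs ->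
  (exp (- (Rabs t / A) * (1 - ch)) * u1 - p1) ^ 2 + (exp (- (Rabs t / A) * (1 - ch)) * u2 - p2) ^ 2
     <= Rabs t * Fs ->
  (p1 ^ 2 + p2 ^ 2) * exp (- Rabs t / 2) - sqrt (p1 ^ 2 + p2 ^ 2) * sqrt Fs * mf (1/2 - 1/A) (Rabs t)
  <= sqrt 2 * p1 * (u1 * (/ sqrt 2 * exp (- Rabs t / 2))) + sqrt 2 * p2 * (u2 * (/ sqrt 2 * exp (- Rabs t / 2))).
Proof.
  intros HA Hch HFs HW.
  set (s := Rabs t) in *. assert (Hs : 0 <= s) by apply Rabs_pos.
  set (zt := exp (- (s / A) * (1 - ch))) in *.
  assert (Hzt : 0 < zt) by apply exp_pos.
  set (E := exp (- s / 2) / zt).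
  assert (Hs2 : sqrt 2 <> 0) by (apply Rgt_not_eq, sqrt_lt_R0; lra).
  assert (HL : sqrt 2 * p1 * (u1 * (/ sqrt 2 * exp (- s / 2))) + sqrt 2 * p2 * (u2 * (/ sqrt 2 * exp (- s / 2)))
     = (p1 * (zt * u1) + p2 * (zt * u2)) * E).
  { unfold E. field. split; lra. }
  rewrite HL.
  assert (HE : E = exp (- s / 2 + (s / A) * (1 - ch))).
  { unfold E, zt. rewrite exp_plus. unfold Rdiv at 1. f_equal.
    rewrite <- exp_Ropp. f_equal. unfold Rdiv. ring. }
  assert (HA0 : 0 < A) by lra.
  assert (Hsa : 0 <= s / A) by (apply Rdiv_le_0_compat; lra).
  assert (HE1 : exp (- s / 2) <= E).
  { rewrite HE. apply exp_mono. nra. }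
  set (b := 1/2 - 1/A).
  assert (Hb : 49/100 <= b <= 1/2).
  { unfold b. assert (0 < 1/A <= 1/100).
    { split. apply Rdiv_lt_0_compat; lra.
      apply Rmult_le_reg_r with A; [lra|]. unfold Rdiv. rewrite Rmult_assoc, Rinv_l by lra. nra. }
    lra. }
  assert (HE2 : E <= exp (- b * s)).
  { rewrite HE. apply exp_mono. unfold b.
    replace (- (1/2 - 1/A) * s) with (- s / 2 + s / A) by (field; lra). nra. }
  set (v1 := zt * u1) in *. set (v2 := zt * u2) in *.
  set (P := p1 ^ 2 + p2 ^ 2).
  assert (HP : 0 <= P) by (unfold P; nra).
  set (pW := p1 * (v1 - p1) + p2 * (v2 - p2)).
  assert (Hpv : p1 * v1 + p2 * v2 = P + pW) by (unfold P, pW; ring).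
  assert (HpW2 : pW ^ 2 <= P * (s * Fs)).
  { apply Rle_trans with (P * ((v1 - p1) ^ 2 + (v2 - p2) ^ 2)).
    - unfold pW, P. assert (0 <= (p1 * (v2 - p2) - p2 * (v1 - p1))^2) by apply pow2_ge_0. nra.
    - apply Rmult_le_compat_l; auto. }
  assert (HpW : - pW <= sqrt P * sqrt Fs * sqrt s).
  { assert (Habs : Rabs pW = sqrt (pW * pW)) by (rewrite <- sqrt_Rsqr_abs; reflexivity).
    assert (sqrt (pW * pW) <= sqrt (P * (s * Fs))) by (apply sqrt_le_1; nra).
    rewrite (sqrt_mult P), (sqrt_mult s) in H by nra.
    pose proof (Rle_abs (- pW)). rewrite Rabs_Ropp in H0. nra. }
  pose proof (m_bound b s Hb Hs).
  assert (HK : 0 <= sqrt P * sqrt Fs) by (apply Rmult_le_pos; apply sqrt_pos).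
  assert (HsE : sqrt s * E <= mf b s).
  { eapply Rle_trans; [|exact H]. apply Rmult_le_compat_l; auto. apply sqrt_pos. }
  rewrite Hpv.
  assert (HEp : 0 <= E) by (unfold E; apply Rdiv_le_0_compat; [left; apply exp_pos| lra]).
  assert (pW * E >= - (sqrt P * sqrt Fs * sqrt s) * E) by nra.
  assert (sqrt P * sqrt Fs * (sqrt s * E) <= sqrt P * sqrt Fs * mf b s) by (apply Rmult_le_compat_l; auto).
  assert (P * exp (- s / 2) <= P * E) by (apply Rmult_le_compat_l; auto).
  nra.
Qed.


Lemma exp_tail M : 0 <= M -> exp (- M / 2) * (1 + M / 2) <= 1.
Proof.
  intros HM. pose proof (exp_ineq1_le (M / 2)).
  replace (- M / 2) with (- (M / 2)) by field. rewrite exp_Ropp.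
  assert (0 < exp (M/2)) by apply exp_pos.
  apply (Rmult_le_reg_l (exp (M/2))); auto. rewrite <- Rmult_assoc, Rinv_r; lra.
Qed.

Theorem claim2p5 :
  forall (chi : R -> R),
    smooth chi ->
    (forall x, 0 <= chi x <= 1) ->
    (forall x, chi (- x) = chi x) ->
    (forall x, -1 <= x <= 1 -> chi x = 1) ->
    (forall x, 2 < Rabs x -> chi x = 0) ->
    (forall x l, 0 < x -> derivable_pt_lim chi x l -> l <= 0) ->
  exists A0 C0 : R, 1 < A0 /\ 0 < C0 /\
    forall (A : R) (xi : R -> R * R),
      A0 <= A -> H1 xi -> L2c xi ->
      forall (gw : R -> R * R) (N : R),
        has_deriv_AC (cutoff_mul (zeta chi A) xi) gw ->
        integral_R (fun x => sqnorm (gw x)) N ->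
        N - sqnorm (cutoff_mul (zeta chi A) xi 0)
          >= - (C0 / A ^ 2) * (N + sqnorm (cutoff_mul (zeta chi A) xi 0)).
Proof.
  intros chi _ Hchi _ _ _ _.
  exists 100, 1. split; [lra|]. split; [lra|].
  intros A xi HA _ HL2c gw N Hder HN.
  set (w := cutoff_mul (zeta chi A) xi) in *.
  set (p1 := fst (w 0)). set (p2 := snd (w 0)).
  change (sqnorm (w 0)) with (p1 ^ 2 + p2 ^ 2).
  set (P := p1 ^ 2 + p2 ^ 2).
  assert (HP : 0 <= P) by (unfold P; nra).
  destruct HN as [F [HF HFl]]. destruct HL2c as [[F1 [HF1 HF1l]] [F2 [HF2 HF2l]]].
  set (b := 1/2 - 1/A).
  assert (HFnn : forall x y, x <= y -> 0 <= F x y).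
  { intros x y Hxy. apply (HK_nonneg (fun x => sqnorm (gw x)) x y); auto. intros; unfold sqnorm; nra. }
  assert (Hsplit : forall x y z, x <= y -> y <= z -> F x z = F x y + F y z).
  { intros x y z Hxy Hyz. apply (HK_split_eq (fun x => sqnorm (gw x)) x y z); try apply HF; lra. }
  assert (Key : forall a B, a <= 0 -> 0 <= B ->
     P * (2 - 2 * exp (a / 2) - 2 * exp (- B / 2)) <=
     sqrt 2 * p1 * F1 a B + sqrt 2 * p2 * F2 a B + 15/8 * F a B).
  { intros a B Ha HB.
    set (Fa := F a 0). set (Fb := F 0 B).
    assert (HFa : 0 <= Fa) by (apply HFnn; lra).
    assert (HFb : 0 <= Fb) by (apply HFnn; lra).
    assert (HFab : F a B = Fa + Fb) by (apply Hsplit; lra).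
    assert (HWr : forall t, 0 <= t <= B ->
       (fst (w t) - p1) ^ 2 + (snd (w t) - p2) ^ 2 <= Rabs t * Fb).
    { intros t Ht. destruct (Hder 0 t) as [D1 D2]; [lra|].
      pose proof (HK_CS gw 0 t _ _ _ ltac:(lra) D1 D2 (HF 0 t ltac:(lra))).
      assert (Fb = F 0 t + F t B) by (apply Hsplit; lra).
      assert (0 <= F t B) by (apply HFnn; lra).
      rewrite Rabs_right by lra. unfold p1, p2.
      rewrite Rminus_0_r in H.
      assert (t * F 0 t <= t * Fb) by (apply Rmult_le_compat_l; lra). lra. }
    assert (HWl : forall t, a <= t <= 0 ->
       (fst (w t) - p1) ^ 2 + (snd (w t) - p2) ^ 2 <= Rabs t * Fa).
    { intros t Ht. destruct (Hder t 0) as [D1 D2]; [lra|].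
      pose proof (HK_CS gw t 0 _ _ _ ltac:(lra) D1 D2 (HF t 0 ltac:(lra))).
      assert (Fa = F a t + F t 0) by (apply Hsplit; lra).
      assert (0 <= F a t) by (apply HFnn; lra).
      rewrite Rabs_left1 by lra. unfold p1, p2.
      rewrite Rminus_0_l in H.
      assert (- t * F t 0 <= - t * Fa) by (apply Rmult_le_compat_l; lra).
      replace ((fst (w t) - fst (w 0)) ^ 2) with ((fst (w 0) - fst (w t)) ^ 2) by ring.
      replace ((snd (w t) - snd (w 0)) ^ 2) with ((snd (w 0) - snd (w t)) ^ 2) by ring.
      lra. }
    pose proof (HK_lin _ _ (sqrt 2 * p1) (sqrt 2 * p2) a B _ _ (HF1 a B ltac:(lra)) (HF2 a B ltac:(lra))) as HG.
    set (Kr := sqrt P * sqrt Fb). set (Kl := sqrt P * sqrt Fa).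
    assert (HKr : 0 <= Kr) by (apply Rmult_le_pos; apply sqrt_pos).
    assert (HKl : 0 <= Kl) by (apply Rmult_le_pos; apply sqrt_pos).
    pose proof (FTC (Hr P Kr b) (fun t => P * exp (- t / 2) - Kr * mf b t) 0 B HB
       (fun x Hx => Hr_deriv P Kr b x (proj1 Hx))) as HIr.
    pose proof (FTC (Hl P Kl b) (fun t => P * exp (t / 2) - Kl * mf b (- t)) a 0 Ha
       (fun x Hx => Hl_deriv P Kl b x (proj2 Hx))) as HIl.
    pose proof (HK_split_le _ _ _ a 0 B _ _ _ Ha HB HG HIl HIr) as Hsp.
    assert (Pr : forall t, 0 <= t <= B -> P * exp (- t / 2) - Kr * mf b t <=
       sqrt 2 * p1 * (fst (xi t) * phi t) + sqrt 2 * p2 * (snd (xi t) * phi t)).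
    { intros t Ht. pose proof (ptwise A (chi t) t (fst (xi t)) (snd (xi t)) p1 p2 Fb HA (Hchi t) HFb (HWr t Ht)) as Hp.
      rewrite (Rabs_right t) in Hp by lra. unfold phi. rewrite (Rabs_right t) by lra.
      unfold Kr, b. fold P in Hp. lra. }
    assert (Pl : forall t, a <= t <= 0 -> P * exp (t / 2) - Kl * mf b (- t) <=
       sqrt 2 * p1 * (fst (xi t) * phi t) + sqrt 2 * p2 * (snd (xi t) * phi t)).
    { intros t Ht. pose proof (ptwise A (chi t) t (fst (xi t)) (snd (xi t)) p1 p2 Fa HA (Hchi t) HFa (HWl t Ht)) as Hp.
      assert (Et : exp (- Rabs t / 2) = exp (t / 2)) by (rewrite Rabs_left1 by lra; f_equal; field).
      rewrite Et in Hp. rewrite (Rabs_left1 t) in Hp by lra. unfold phi. rewrite Et.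
      unfold Kl, b. fold P in Hp. lra. }
    specialize (Hsp Pl Pr).
    assert (E0 : exp (- 0 / 2) = 1) by (replace (- 0 / 2) with 0 by field; apply exp_0).
    assert (E0' : exp (0 / 2) = 1) by (replace (0 / 2) with 0 by field; apply exp_0).
    assert (E1 : exp (- b * 0) = 1) by (replace (- b * 0) with 0 by ring; apply exp_0).
    assert (E1' : exp (- b * - 0) = 1) by (replace (- b * - 0) with 0 by ring; apply exp_0).
    assert (Q0 : qf 0 = sqrt (15/2)) by (unfold qf; f_equal; ring).
    assert (Q0' : qf (- 0) = sqrt (15/2)) by (unfold qf; f_equal; ring).
    assert (HIr' : Hr P Kr b B - Hr P Kr b 0 >= 2 * P - 2 * P * exp (- B / 2) - Kr * sqrt (15/2)).
    { unfold Hr. rewrite E0, E1, Q0.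
      assert (0 <= Kr * (exp (- b * B) * qf B)).
      { apply Rmult_le_pos; auto. apply Rmult_le_pos; [left; apply exp_pos| apply sqrt_pos]. }
      lra. }
    assert (HIl' : Hl P Kl b 0 - Hl P Kl b a >= 2 * P - 2 * P * exp (a / 2) - Kl * sqrt (15/2)).
    { unfold Hl. rewrite E0', E1', Q0'.
      assert (0 <= Kl * (exp (- b * - a) * qf (- a))).
      { apply Rmult_le_pos; auto. apply Rmult_le_pos; [left; apply exp_pos| apply sqrt_pos]. }
      lra. }
    assert (Hsq : sqrt (15/2) * sqrt (15/2) = 15/2) by (apply sqrt_sqrt; lra).
    assert (HsP : sqrt P * sqrt P = P) by (apply sqrt_sqrt; lra).
    assert (HsFa : sqrt Fa * sqrt Fa = Fa) by (apply sqrt_sqrt; lra).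
    assert (HsFb : sqrt Fb * sqrt Fb = Fb) by (apply sqrt_sqrt; lra).
    assert (AMr : Kr * sqrt (15/2) <= P + 15/8 * Fb).
    { unfold Kr. assert (0 <= (sqrt P - sqrt Fb * sqrt (15/2) / 2) ^ 2) by apply pow2_ge_0. nra. }
    assert (AMl : Kl * sqrt (15/2) <= P + 15/8 * Fa).
    { unfold Kl. assert (0 <= (sqrt P - sqrt Fa * sqrt (15/2) / 2) ^ 2) by apply pow2_ge_0. nra. }
    rewrite HFab. lra. }
  assert (HPN : P <= N).
  { apply Rnot_lt_le; intro HNP.
    set (dl := 2 * P - 15/8 * N).
    assert (Hdl : 0 < dl) by (unfold dl; lra).
    set (c := sqrt 2 * (Rabs p1 + Rabs p2) + 2).
    assert (Hs2 : 0 < sqrt 2) by (apply sqrt_lt_R0; lra).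
    assert (Hc : 2 <= c) by (unfold c; pose proof (Rabs_pos p1); pose proof (Rabs_pos p2); nra).
    set (e := dl / (8 * c)).
    assert (He : 0 < e) by (unfold e; apply Rdiv_lt_0_compat; lra).
    assert (Hce : c * e = dl / 8) by (unfold e; field; lra).
    destruct (HFl e He) as [M0 HM0]. destruct (HF1l e He) as [M1 HM1]. destruct (HF2l e He) as [M2 HM2].
    set (M := Rmax (Rmax (Rabs M0) (Rabs M1)) (Rmax (Rabs M2) (32 * P / dl))).
    assert (HMa : Rabs M0 <= M /\ Rabs M1 <= M /\ Rabs M2 <= M /\ 32 * P / dl <= M).
    { unfold M. repeat split.
      - eapply Rle_trans; [apply Rmax_l|apply Rmax_l].
      - eapply Rle_trans; [apply Rmax_r|apply Rmax_l].
      - eapply Rle_trans; [apply Rmax_l|apply Rmax_r].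
      - eapply Rle_trans; [apply Rmax_r|apply Rmax_r]. }
    destruct HMa as [Ha0 [Ha1 [Ha2 Ha3]]].
    pose proof (Rle_abs M0). pose proof (Rle_abs M1). pose proof (Rle_abs M2).
    assert (HM : 0 <= M) by (pose proof (Rabs_pos M0); lra).
    specialize (HM0 (-M) M ltac:(lra) ltac:(lra)).
    specialize (HM1 (-M) M ltac:(lra) ltac:(lra)).
    specialize (HM2 (-M) M ltac:(lra) ltac:(lra)).
    specialize (Key (-M) M ltac:(lra) HM).
    rewrite Rminus_0_r in HM1, HM2.
    pose proof (exp_tail M HM) as Hex.
    set (ex := exp (- M / 2)) in *.
    assert (Hexp : 0 < ex) by apply exp_pos.
    assert (H4 : 4 * P * ex <= dl / 4).
    { assert (32 * P <= dl * M).
      { apply (Rmult_le_compat_r dl) in Ha3; [|lra]. unfold Rdiv in Ha3.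
        rewrite Rmult_assoc, Rinv_l in Ha3 by lra. lra. }
      assert (4 * P * ex * (1 + M / 2) <= dl / 4 * (1 + M / 2)) by nra.
      apply Rmult_le_reg_r with (1 + M / 2); lra. }
    assert (Hp1 : sqrt 2 * p1 * F1 (- M) M <= sqrt 2 * Rabs p1 * e).
    { eapply Rle_trans; [apply Rle_abs|]. rewrite !Rabs_mult, (Rabs_right (sqrt 2)) by lra.
      apply Rmult_le_compat_l; [pose proof (Rabs_pos p1); nra| lra]. }
    assert (Hp2 : sqrt 2 * p2 * F2 (- M) M <= sqrt 2 * Rabs p2 * e).
    { eapply Rle_trans; [apply Rle_abs|]. rewrite !Rabs_mult, (Rabs_right (sqrt 2)) by lra.
      apply Rmult_le_compat_l; [pose proof (Rabs_pos p2); nra| lra]. }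
    apply Rabs_def2 in HM0.
    unfold c in Hce. unfold dl in *.
    lra. }
  assert (0 <= 1 / A ^ 2) by (apply Rdiv_le_0_compat; [lra| apply pow_lt; lra]).
  assert (0 <= 1 / A ^ 2 * (N + P)) by (apply Rmult_le_pos; lra).
  lra.
Qed.
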